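(* Let $c>2$, $m\ge3$ and $p\le1/2$. If $mp\ge c$, then for every $q\in[0,1]$, \[ \ell_1(\mathrm{Bin}(m,p),\mathrm{Bin}(m,q))\ge\frac1{350}\min\left(\frac{\sqrt m\,|p-q|}{\sqrt{p(1-p)}},1\right). \]
   Context: $m$ is an integer, $p\in[0,1]$, and $\ell_1(P,Q)=\sum_x|P(x)-Q(x)|$. *)

(* Defs.v *)
From HB Require Import structures.
From mathcomp Require Import all_boot all_order all_algebra.
From mathcomp Require Import reals.
Set Implicit Arguments. Unset Strict Implicit. Unset Printing Implicit Defensive.
Import Order.TTheory GRing.Theory Num.Theory.
Local Open Scope ring_scope.

Definition binom_pmf (R : realType) (m : nat) (p : R) (k : nat) : R :=
  ('C(m, k))%:R * p ^+ k * (1 - p) ^+ (m - k).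

(* l1 distance sum_x |P(x) - Q(x)| between Bin(m,p) and Bin(m,q);
   both are supported on {0,...,m}, so the sum over k < m.+1 is the full sum. *)
Definition l1_binom (R : realType) (m : nat) (p q : R) : R :=
  \sum_(k < m.+1) `|binom_pmf m p k - binom_pmf m q k|.

(* Main.v *)
Require Import Defs.
From HB Require Import structures.
From mathcomp Require Import all_boot all_order all_algebra.
From mathcomp Require Import reals.
From mathcomp Require Import ring lra.
Import Order.TTheory GRing.Theory Num.Theory.
Local Open Scope ring_scope.

Lemma pmf_sum1 (R : realType) (m : nat) (a : R) :
  \sum_(k < m.+1) binom_pmf m a k = 1.
Proof.
have := exprDn (1 - a) a m; rewrite subrK expr1n => ->.
by apply: eq_bigr => i _; rewrite /binom_pmf -mulr_natl; ring.
Qed.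

Lemma pmf_ffact (R : realType) (j m : nat) (a : R) :
  \sum_(k < m.+1) binom_pmf m a k * (k ^_ j)%:R = (m ^_ j)%:R * a ^+ j.
Proof.
elim: j m => [|j IH] m.
  rewrite ffactn0 expr0 mulr1; under eq_bigr do rewrite ffactn0 mulr1.
  exact: pmf_sum1.
case: m => [|m].
  by rewrite big_ord_recl big_ord0 /= ffact0n /= !mulr0 mul0r addr0.
rewrite big_ord_recl /= ffact0n /= mulr0 add0r ffactSS natrM.
have -> : (m.+1)%:R * (m ^_ j)%:R * a ^+ j.+1 = ((m.+1)%:R * a) * ((m ^_ j)%:R * a ^+ j) :> R by rewrite exprS; ring.
rewrite -(IH m) mulr_sumr; apply: eq_bigr => i _.
rewrite /bump /= ffactSS natrM /binom_pmf subSS.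
have E : ('C(m.+1, i.+1) * i.+1 = m.+1 * 'C(m, i))%N.
  by rewrite mulnC -mul_bin_diag.
have E' : ('C(m.+1, i.+1))%:R * (i.+1)%:R = (m.+1)%:R * ('C(m, i))%:R :> R.
  by rewrite -!natrM E.
set A := (i ^_ j)%:R; set B := a ^+ i; set Cc := (1 - a) ^+ (m - i).
rewrite add1n exprS -/B.
transitivity (('C(m.+1, i.+1))%:R * (i.+1)%:R * a * B * Cc * A); first ring.
rewrite E'; ring.
Qed.

Definition Ff (R : realType) (n j : nat) : R := (n ^_ j)%:R.

Lemma Ff_poly (R : realType) (k : nat) :
  [/\ Ff R k 1 = k%:R, Ff R k 2 = k%:R * (k%:R - 1),
      Ff R k 3 = k%:R * (k%:R - 1) * (k%:R - 2) &
      Ff R k 4 = k%:R * (k%:R - 1) * (k%:R - 2) * (k%:R - 3)].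
Proof.
rewrite /Ff; case: k => [|[|[|[|k]]]]; rewrite ?ffact0n /=.
- split; ring.
- rewrite !ffactSS !ffact0n /=; split; ring.
- rewrite !ffactSS !ffact0n /= ?ffactn0; split; ring.
- rewrite !ffactSS !ffact0n /= ?ffactn0; split; ring.
rewrite !ffactSS ?ffactn0 !natrM -[k.+4]addn4 -[k.+3]addn3 -[k.+2]addn2 -[k.+1]addn1 !natrD.
split; ring.
Qed.

Lemma pmf_poly4 (R : realType) (m : nat) (a c0 c1 c2 c3 c4 : R) :
  \sum_(k < m.+1) binom_pmf m a k *
     (c0 + c1 * Ff R k 1 + c2 * Ff R k 2 + c3 * Ff R k 3 + c4 * Ff R k 4)
  = c0 + c1 * Ff R m 1 * a + c2 * Ff R m 2 * a ^+ 2 + c3 * Ff R m 3 * a ^+ 3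
    + c4 * Ff R m 4 * a ^+ 4.
Proof.
transitivity (c0 * \sum_(k < m.+1) binom_pmf m a k * Ff R k 0
  + c1 * \sum_(k < m.+1) binom_pmf m a k * Ff R k 1
  + c2 * \sum_(k < m.+1) binom_pmf m a k * Ff R k 2
  + c3 * \sum_(k < m.+1) binom_pmf m a k * Ff R k 3
  + c4 * \sum_(k < m.+1) binom_pmf m a k * Ff R k 4).
  rewrite !mulr_sumr -!big_split /=; apply: eq_bigr => i _.
  rewrite /Ff ffactn0; ring.
rewrite /Ff !pmf_ffact ffactn0 expr0 expr1; ring.
Qed.

Lemma wCS (R : realType) (n : nat) (w x y : 'I_n -> R) :
  (forall i, 0 <= w i) ->
  (\sum_i w i * x i * y i) ^+ 2 <=
  (\sum_i w i * x i ^+ 2) * (\sum_i w i * y i ^+ 2).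
Proof.
move=> w0.
set A := \sum_i w i * x i ^+ 2; set B := \sum_i w i * y i ^+ 2.
set C := \sum_i w i * x i * y i.
have A0 : 0 <= A by apply: sumr_ge0 => i _; rewrite mulr_ge0 // sqr_ge0.
have H : 0 <= \sum_i w i * (C * x i - A * y i) ^+ 2.
  by apply: sumr_ge0 => i _; rewrite mulr_ge0 // sqr_ge0.
have E : \sum_i w i * (C * x i - A * y i) ^+ 2 = A * (A * B - C ^+ 2).
  transitivity (C ^+ 2 * A - 2 * C * A * C + A ^+ 2 * B); last by ring.
  transitivity (\sum_i (C ^+ 2 * (w i * x i ^+ 2) - (2 * C * A) * (w i * x i * y i)
     + A ^+ 2 * (w i * y i ^+ 2))).
    by apply: eq_bigr => i _; ring.
  by rewrite big_split /= sumrB -!mulr_sumr.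
have [Az|Ap] := eqVneq A 0.
  have Cz : C = 0.
    rewrite /C big1 // => i _.
    have := psumr_eq0P (P := predT) (F := fun i => w i * x i ^+ 2).
    move=> /(_ (fun i _ => mulr_ge0 (w0 i) (sqr_ge0 (x i))) Az i isT).
    move/eqP; rewrite mulf_eq0 sqrf_eq0 => /orP [/eqP->|/eqP->]; ring.
  by rewrite Cz Az expr0n /= mul0r.
have Apos : 0 < A by rewrite lt_def Ap A0.
rewrite E in H; rewrite pmulr_rge0 // subr_ge0 in H.
exact: H.
Qed.

Lemma bern_aux (R : realType) (a : R) (m : nat) :
  0 <= a -> (1 + a) ^+ m * (1 - m%:R * a) <= 1.
Proof.
move=> a0; elim: m => [|m IH]; first by rewrite expr0 mul0r subr0 mulr1.
apply: le_trans IH.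
have e : (1 + a) ^+ m.+1 * (1 - m.+1%:R * a) =
   (1 + a) ^+ m * (1 - m%:R * a) - (1 + a) ^+ m * (m%:R * a ^+ 2 + a ^+ 2).
  rewrite exprS -natr1; ring.
rewrite e lerBlDr lerDl; apply: mulr_ge0; first exact: exprn_ge0 (addr_ge0 ler01 a0).
by apply: addr_ge0; [apply: mulr_ge0 => //; apply: sqr_ge0| apply: sqr_ge0].
Qed.

Lemma mom1 (R : realType) (m : nat) (a t : R) :
  \sum_(k < m.+1) binom_pmf m a k * (k%:R - t) = m%:R * a - t.
Proof.
transitivity (\sum_(k < m.+1) binom_pmf m a k *
  (- t + 1 * Ff R k 1 + 0 * Ff R k 2 + 0 * Ff R k 3 + 0 * Ff R k 4)).
  by apply: eq_bigr => k _; case: (Ff_poly R k) => -> _ _ _; ring.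
by rewrite pmf_poly4; case: (Ff_poly R m) => -> _ _ _; ring.
Qed.

Lemma mom2 (R : realType) (m : nat) (a t : R) :
  \sum_(k < m.+1) binom_pmf m a k * (k%:R - t) ^+ 2
  = m%:R * a * (1 - a) + (m%:R * a - t) ^+ 2.
Proof.
transitivity (\sum_(k < m.+1) binom_pmf m a k *
  (t ^+ 2 + (1 - 2 * t) * Ff R k 1 + 1 * Ff R k 2 + 0 * Ff R k 3 + 0 * Ff R k 4)).
  by apply: eq_bigr => k _; case: (Ff_poly R k) => -> -> _ _; ring.
by rewrite pmf_poly4; case: (Ff_poly R m) => -> -> _ _; ring.
Qed.

Lemma mom4 (R : realType) (m : nat) (a : R) :
  \sum_(k < m.+1) binom_pmf m a k * (k%:R - m%:R * a) ^+ 4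
  = m%:R * a * (1 - a) * (1 + 3 * (m%:R - 2) * a * (1 - a)).
Proof.
set t := m%:R * a.
transitivity (\sum_(k < m.+1) binom_pmf m a k *
  (t ^+ 4 + (1 - 4 * t + 6 * t ^+ 2 - 4 * t ^+ 3) * Ff R k 1
   + (7 - 12 * t + 6 * t ^+ 2) * Ff R k 2 + (6 - 4 * t) * Ff R k 3 + 1 * Ff R k 4)).
  by apply: eq_bigr => k _; case: (Ff_poly R k) => -> -> -> ->; ring.
by rewrite pmf_poly4 /t; case: (Ff_poly R m) => -> -> -> ->; ring.
Qed.

Lemma chi2 (R : realType) (m : nat) (p q : R) :
  0 < p -> p < 1 ->
  \sum_(k < m.+1) (binom_pmf m q k - binom_pmf m p k) ^+ 2 / binom_pmf m p k
  = (1 + (q - p) ^+ 2 / (p * (1 - p))) ^+ m - 1.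
Proof.
move=> p0 p1.
have p0' : p != 0 by rewrite gt_eqF.
have p1' : 1 - p != 0 by rewrite subr_eq0 eq_sym lt_eqF.
have Pne (k : 'I_m.+1) : binom_pmf m p k != 0.
  rewrite /binom_pmf !mulf_neq0 ?expf_neq0 // pnatr_eq0 -lt0n bin_gt0.
  by rewrite -ltnS.
transitivity (\sum_(k < m.+1) ('C(m, k)%:R * (q ^+ 2 / p) ^+ k *
   ((1 - q) ^+ 2 / (1 - p)) ^+ (m - k)) - 2 * \sum_(k < m.+1) binom_pmf m q k
   + \sum_(k < m.+1) binom_pmf m p k).
  rewrite mulr_sumr -sumrB -big_split /=; apply: eq_bigr => k _.
  have := Pne k; rewrite /binom_pmf => Pk.
  have Ck : 'C(m, k)%:R != 0 :> R.
    by move: Pk; rewrite -!mulrA mulf_eq0 negb_or => /andP [].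
  rewrite !expr_div_n (exprAC q) (exprAC (1 - q)).
  move: Pk Ck; set C := 'C(m, k)%:R; set a := p ^+ k; set b := (1 - p) ^+ (m - k).
  set u := q ^+ k; set v := (1 - q) ^+ (m - k) => Pk Ck.
  have a0 : a != 0 by rewrite expf_neq0.
  have b0 : b != 0 by rewrite expf_neq0.
  field.
  by rewrite Ck a0 b0.
rewrite !pmf_sum1.
have := exprDn ((1 - q) ^+ 2 / (1 - p)) (q ^+ 2 / p) m.
have -> : (1 - q) ^+ 2 / (1 - p) + q ^+ 2 / p = 1 + (q - p) ^+ 2 / (p * (1 - p)).
  by field; rewrite p0' p1'.
move=> ->.
have -> : \sum_(k < m.+1) 'C(m, k)%:R * (q ^+ 2 / p) ^+ k * ((1 - q) ^+ 2 / (1 - p)) ^+ (m - k)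
  = \sum_(i < m.+1) ((1 - q) ^+ 2 / (1 - p)) ^+ (m - i) * (q ^+ 2 / p) ^+ i *+ 'C(m, i).
  by apply: eq_bigr => i _; rewrite -mulr_natl; ring.
ring.
Qed.

Theorem lemma7 (R : realType) (c : R) (m : nat) (p : R) :
  2 < c -> (3 <= m)%N -> 0 <= p <= 1 -> p <= 1 / 2 -> c <= m%:R * p ->
  forall q : R, 0 <= q <= 1 ->
    l1_binom m p q >=
      (1 / 350) * Num.min (Num.sqrt m%:R * `|p - q| / Num.sqrt (p * (1 - p))) 1.
Proof.
move=> hc hm /andP [p0 p1] ph hmp q /andP [q0 q1].
set M := m%:R.
have M3 : 3 <= M by rewrite /M (ler_nat R 3 m).
have pp : 0 < p by rewrite lt_def; apply/andP; split => //; apply/eqP => e;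
  move: hmp; rewrite e mulr0; lra.
have plt1 : p < 1 by lra.
set V := M * p * (1 - p).
have V1 : 1 < V by rewrite /V; nra.
set mu := M * p.
set d := M * (q - p).
set L := l1_binom m p q.
pose P (k : nat) := binom_pmf m p k.
pose Q (k : nat) := binom_pmf m q k.
have Ppos (k : 'I_m.+1) : 0 < P k.
  rewrite /P /binom_pmf !mulr_gt0 ?exprn_gt0 ?subr_gt0 // ltr0n bin_gt0.
  by rewrite -ltnS.
have Qge0 (k : nat) : 0 <= Q k.
  by rewrite /Q /binom_pmf !mulr_ge0 ?exprn_ge0 ?subr_ge0.
have L0 : 0 <= L by rewrite /L /l1_binom; apply: sumr_ge0 => i _.
set S := \sum_(k < m.+1) `|P k - Q k| * (k%:R - mu) ^+ 2.
have S0 : 0 <= S by apply: sumr_ge0 => i _; rewrite mulr_ge0 ?sqr_ge0.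
have dE : d = \sum_(k < m.+1) (k%:R - mu) * (Q k - P k).
  transitivity (\sum_(k < m.+1) Q k * (k%:R - mu) - \sum_(k < m.+1) P k * (k%:R - mu)).
    by rewrite /P /Q !mom1 /d /mu; ring.
  by rewrite -sumrB; apply: eq_bigr => k _; ring.
have h1 : d ^+ 2 <= L * S.
  have hn : `|d| <= \sum_(k < m.+1) `|P k - Q k| * `|k%:R - mu| * 1.
    rewrite dE; apply: le_trans (ler_norm_sum _ _ _) _; rewrite le_eqVlt; apply/orP; left; apply/eqP.
    by apply: eq_bigr => k _; rewrite mulr1 normrM mulrC distrC.
  have cs := @wCS R m.+1 (fun k : 'I_m.+1 => `|P k - Q k|) (fun k : 'I_m.+1 => `|k%:R - mu|)
     (fun _ => 1) (fun k => normr_ge0 _).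
  rewrite /= in cs.
  have e1 : \sum_(i < m.+1) `|P i - Q i| * `|i%:R - mu| ^+ 2 = S.
    by apply: eq_bigr => k _; rewrite real_normK ?num_real.
  have e2 : \sum_(i < m.+1) `|P i - Q i| * 1 ^+ 2 = L.
    by apply: eq_bigr => k _; rewrite expr1n mulr1.
  rewrite e1 e2 in cs.
  have dd : d ^+ 2 = `|d| ^+ 2 by rewrite real_normK ?num_real.
  rewrite dd; apply: le_trans _ (_ : S * L <= L * S); last by rewrite mulrC.
  apply: le_trans cs; have := normr_ge0 d; nra.
set M4 := V * (1 + 3 * (M - 2) * p * (1 - p)).
set a := (q - p) ^+ 2 / (p * (1 - p)).
set chi := (1 + a) ^+ m - 1.
have h3 : S ^+ 2 <= M4 * chi.
  have cs := @wCS R m.+1 (fun k : 'I_m.+1 => P k) (fun k : 'I_m.+1 => (k%:R - mu) ^+ 2)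
     (fun k : 'I_m.+1 => `|P k - Q k| / P k) (fun k => ltW (Ppos k)).
  rewrite /= in cs.
  have e0 : \sum_(i < m.+1) P i * (i%:R - mu) ^+ 2 * (`|P i - Q i| / P i) = S.
    apply: eq_bigr => k _; have := Ppos k; move: (P k) => x x0.
    by field; rewrite gt_eqF.
  have e1 : \sum_(i < m.+1) P i * ((i%:R - mu) ^+ 2) ^+ 2 = M4.
    rewrite /M4 /V /mu /M -mom4; apply: eq_bigr => k _; rewrite -exprM //.
  have e2 : \sum_(i < m.+1) P i * (`|P i - Q i| / P i) ^+ 2 = chi.
    rewrite /chi /a -chi2 //; apply: eq_bigr => k _.
    rewrite expr_div_n real_normK ?num_real //.
    have := Ppos k; rewrite /P /Q; move: (binom_pmf m p k) (binom_pmf m q k) => x y x0.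
    by field; rewrite gt_eqF.
  by rewrite e0 e1 e2 in cs.
have h2 : S <= V + (M * q * (1 - q) + d ^+ 2).
  have -> : V + (M * q * (1 - q) + d ^+ 2) =
     \sum_(k < m.+1) (P k + Q k) * (k%:R - mu) ^+ 2.
    rewrite /P /Q; under eq_bigr do rewrite mulrDl.
    by rewrite big_split /= !mom2 /V /d /mu /M; ring.
  apply: ler_sum => k _; apply: ler_wpM2r; first exact: sqr_ge0.
  apply: le_trans (ler_normB _ _) _.
  by rewrite (ger0_norm (Qge0 k)) (ger0_norm (ltW (Ppos k))).
have hr0 : 0 <= Num.sqrt M * `|p - q| / Num.sqrt (p * (1 - p)).
  by rewrite divr_ge0 ?mulr_ge0 ?sqrtr_ge0.
set r := Num.sqrt M * `|p - q| / Num.sqrt (p * (1 - p)).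
have hr2 : r ^+ 2 * V = d ^+ 2.
  rewrite /r !expr_div_n exprMn !sqr_sqrtr ?mulr_ge0 ?subr_ge0 ?ler0n //.
  rewrite real_normK ?num_real // /V /d.
  field.
  by rewrite !gt_eqF ?subr_gt0.
have hMa : M * a = d ^+ 2 / V.
  rewrite /a /d /V; field.
  by rewrite !gt_eqF ?subr_gt0 // -/M; lra.
have a0 : 0 <= a by rewrite /a divr_ge0 ?sqr_ge0 ?mulr_ge0 ?subr_ge0.
have M4le : M4 <= 4 * V ^+ 2.
  have : M4 = V + 3 * V ^+ 2 - 6 * V * (p * (1 - p)) by rewrite /M4 /V; ring.
  move=> ->; have : 0 <= p * (1 - p) by rewrite mulr_ge0 ?subr_ge0.
  nra.
have Vp : 0 < V by lra.
case: (leP (d ^+ 2) (V / 2)) => hD.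
-
  have hy : M * a <= 1 / 2.
    by rewrite hMa ler_pdivrMr //; lra.
  have hb := @bern_aux R a m a0; rewrite -/M in hb.
  have hchi : chi <= 2 * (M * a).
    rewrite /chi; have : 1 <= (1 + a) ^+ m by rewrite exprn_ege1 // lerDl.
    have y0 : 0 <= M * a by rewrite hMa divr_ge0 ?sqr_ge0 ?ltW.
    move: hy hb y0; move: ((1 + a) ^+ m) (M * a) => X y.
    nra.
  rewrite hMa in hchi.
  have hchi' : chi * V <= 2 * d ^+ 2.
    have e : 2 * (d ^+ 2 / V) * V = 2 * d ^+ 2 by field; rewrite gt_eqF.
    by rewrite -e ler_wpM2r // ltW.
  have chi0 : 0 <= chi by rewrite /chi subr_ge0 exprn_ege1 // lerDl.
  have key : r ^+ 2 <= 8 * L ^+ 2.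
    have hS2 : S ^+ 2 * V <= 8 * V ^+ 2 * d ^+ 2.
      apply: le_trans (_ : M4 * chi * V <= _).
        nra.
      have h4 : M4 * chi * V <= 4 * V ^+ 2 * (chi * V).
        have : 0 <= chi * V by rewrite mulr_ge0 // ltW.
        nra.
      apply: le_trans h4 _.
      have h5 : 4 * V ^+ 2 * (chi * V) <= 4 * V ^+ 2 * (2 * d ^+ 2).
        have : 0 <= V ^+ 2 by rewrite sqr_ge0.
        nra.
      apply: le_trans h5 _; rewrite le_eqVlt; apply/orP; left; apply/eqP; ring.
    have hD2 : d ^+ 2 * d ^+ 2 <= L ^+ 2 * S ^+ 2.
      have := sqr_ge0 d; nra.
    have [dz|dnz] := eqVneq (d ^+ 2) 0.
      have : r ^+ 2 * V = 0 by rewrite hr2.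
      nra.
    have dp : 0 < d ^+ 2 by rewrite lt_def dnz sqr_ge0.
    (* d^4 V <= L^2 S^2 V <= 8 L^2 V^2 d^2  => d^2 <= 8 L^2 V *)
    have : d ^+ 2 * d ^+ 2 * V <= 8 * L ^+ 2 * V ^+ 2 * d ^+ 2.
      have := sqr_ge0 L; nra.
    move=> h; have h' : d ^+ 2 <= 8 * L ^+ 2 * V.
      have : d ^+ 2 * (d ^+ 2 * V) <= d ^+ 2 * (8 * L ^+ 2 * V ^+ 2).
        by rewrite mulrA; apply: le_trans h _; rewrite le_eqVlt; apply/orP; left; apply/eqP; ring.
      rewrite ler_pM2l // => h''.
      nra.
    rewrite -hr2 in h'; nra.
  have : r <= 3 * L by nra.
  move=> hr; apply: le_trans (_ : 1 / 350 * r <= _).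
    rewrite ler_wpM2l //; first lra.
    by rewrite ge_min lexx.
  lra.
-
  have Mq : M * q * (1 - q) = V + d * (1 - 2 * p) - d * (q - p) by rewrite /V /d; ring.
  have dq : 0 <= d * (q - p) by rewrite /d -mulrA mulr_ge0 ?ler0n // -expr2 sqr_ge0.
  have hd1 : d * (1 - 2 * p) <= d ^+ 2 + 1 / 4.
    have := sqr_ge0 (d - (1 - 2 * p) / 2); nra.
  have hS : S <= 7 * d ^+ 2 by nra.
  have hL : 1 / 7 <= L.
    have : d ^+ 2 <= L * (7 * d ^+ 2) by apply: le_trans h1 _; rewrite ler_wpM2l.
    nra.
  apply: le_trans (_ : 1 / 350 * 1 <= _).
    rewrite ler_wpM2l //; first lra.
    by rewrite ge_min lexx orbT.
  lra.
Qed.
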